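(* Assume $N\ge3$. If $M>0$ and $1<p\le\frac{N+2}{N-2}$, system (S) admits no closed orbit (nonconstant periodic trajectory) contained in the closed quadrant $\{x\ge0,y\ge0\}$. If $p>\frac{N+2}{N-2}$ and $0<M\le\overline M$, system (S) admits no cycle in the open quadrant $\{x>0,y>0\}$ surrounding $P_M$.
   Context: Let $K=\frac{(N-2)p-N}{p-1}$. System (S) is $x_t=\frac{2}{p-1}x-y$, $y_t=-Ky+|x|^{p-1}x+M|y|^{\frac{2p}{p+1}}$. For $p>\frac{N}{N-2}$, $M\ge0$, $X_M$ is the unique positive root of $X^{p-1}+M\left(\frac{2}{p-1}\right)^{\frac{2p}{p+1}}X^{\frac{p-1}{p+1}}-\frac{2K}{p-1}=0$ and $P_M=(X_M,\frac{2}{p-1}X_M)$. $\overline M=\frac{(p+1)((N-2)p-N-2)}{(4p)^{\frac{p}{p+1}}((N-2)(p-1)^2+4)^{\frac{1}{p+1}}}$. A cycle surrounding $P_M$ is a nonconstant periodic orbit whose bounded complementary region contains $P_M$. *)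

(* Defs.v *)
From Stdlib Require Import Reals.
Open Scope R_scope.

(* a^e for a >= 0 and exponent e > 0, with the convention 0^e = 0
   (Stdlib's Rpower 0 e evaluates to 1, so we guard it). *)
Definition powp (a e : R) : R := if Rlt_dec 0 a then Rpower a e else 0.

Definition Kc (N p : R) : R := ((N - 2) * p - N) / (p - 1).

Definition fS1 (p : R) (x y : R) : R := 2 / (p - 1) * x - y.
Definition fS2 (N p M : R) (x y : R) : R :=
  - Kc N p * y + powp (Rabs x) (p - 1) * x + M * powp (Rabs y) (2 * p / (p + 1)).

Definition solS (N p M : R) (x y : R -> R) : Prop :=
  forall t, derivable_pt_lim x t (fS1 p (x t) (y t)) /\
            derivable_pt_lim y t (fS2 N p M (x t) (y t)).

Definition periodic_orbit (N p M : R) (x y : R -> R) : Prop :=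
  solS N p M x y /\
  (exists T, 0 < T /\ forall t, x (t + T) = x t /\ y (t + T) = y t) /\
  (exists t1 t2, x t1 <> x t2 \/ y t1 <> y t2).

Definition on_orbit (x y : R -> R) (a b : R) : Prop :=
  exists t, a = x t /\ b = y t.

(* The point (a,b) is off the orbit and lies in a bounded component of its
   complement: every continuous path starting at (a,b) and avoiding the orbit
   on [0,1] ends inside a fixed ball. *)
Definition surrounds (x y : R -> R) (a b : R) : Prop :=
  ~ on_orbit x y a b /\
  exists B, forall g1 g2 : R -> R,
    continuity g1 -> continuity g2 -> g1 0 = a -> g2 0 = b ->
    (forall s, 0 <= s <= 1 -> ~ on_orbit x y (g1 s) (g2 s)) ->
    g1 1 ^ 2 + g2 1 ^ 2 <= B.

Definition is_XM (N p M X : R) : Prop :=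
  0 < X /\
  powp X (p - 1) + M * powp (2 / (p - 1)) (2 * p / (p + 1)) * powp X ((p - 1) / (p + 1))
  - 2 * Kc N p / (p - 1) = 0.

Definition Mbar (N p : R) : R :=
  (p + 1) * ((N - 2) * p - N - 2) /
  (powp (4 * p) (p / (p + 1)) * powp ((N - 2) * (p - 1) ^ 2 + 4) (1 / (p + 1))).

(* Main.v *)
Require Import Defs.
From Stdlib Require Import Reals Lra Psatz Classical.
Open Scope R_scope.


Lemma dplus f g t a b : derivable_pt_lim f t a -> derivable_pt_lim g t b ->
  derivable_pt_lim (fun t => f t + g t) t (a+b).
Proof. intros; apply (derivable_pt_lim_plus f g); auto. Qed.
Lemma dminus f g t a b : derivable_pt_lim f t a -> derivable_pt_lim g t b ->
  derivable_pt_lim (fun t => f t - g t) t (a-b).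
Proof. intros; apply (derivable_pt_lim_minus f g); auto. Qed.
Lemma dmult f g t a b : derivable_pt_lim f t a -> derivable_pt_lim g t b ->
  derivable_pt_lim (fun t => f t * g t) t (a * g t + f t * b).
Proof. intros; apply (derivable_pt_lim_mult f g); auto. Qed.
Lemma dconst c t : derivable_pt_lim (fun _ => c) t 0.
Proof. apply (derivable_pt_lim_const c t). Qed.
Lemma did t : derivable_pt_lim (fun t => t) t 1.
Proof. apply derivable_pt_lim_id. Qed.
Lemma dcomp f g t a b : derivable_pt_lim f t a -> derivable_pt_lim g (f t) b ->
  derivable_pt_lim (fun t => g (f t)) t (b * a).
Proof. intros; apply (derivable_pt_lim_comp f g); auto. Qed.
Lemma dRp f t l e : 0 < f t -> derivable_pt_lim f t l ->
  derivable_pt_lim (fun t => Rpower (f t) e) t (e * Rpower (f t) (e-1) * l).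
Proof.
  intros Hp Hd. apply (dcomp f (fun u => Rpower u e)); auto.
  apply derivable_pt_lim_power; auto.
Qed.
Lemma dext f g t l r : 0 < r -> (forall u, Rabs (u - t) < r -> f u = g u) ->
  derivable_pt_lim g t l -> derivable_pt_lim f t l.
Proof.
  intros Hr He Hd eps Heps. destruct (Hd eps Heps) as [d Hdd].
  assert (Hm : 0 < Rmin d r) by (apply Rmin_glb_lt; [apply cond_pos|auto]).
  exists (mkposreal _ Hm). intros h Hh Hlt. simpl in Hlt.
  rewrite (He (t+h)), (He t).
  - apply Hdd; auto. apply Rlt_le_trans with (1:=Hlt); apply Rmin_l.
  - rewrite Rminus_diag, Rabs_R0; auto.
  - replace (t+h-t) with h by ring. apply Rlt_le_trans with (1:=Hlt); apply Rmin_r.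
Qed.

Lemma lyap W w T : 0 < T -> (forall t, derivable_pt_lim W t (w t)) ->
  (forall t, w t <= 0) -> (forall t, W (t+T) = W t) -> forall t0, w t0 < 0 -> False.
Proof.
  intros HT Hd Hw Hper t0 Ht0.
  assert (mono : forall s u, s <= u -> W u <= W s).
  { intros s u Hsu. destruct (Rle_lt_or_eq_dec _ _ Hsu) as [Hlt|Heq].
    - destruct (MVT_cor2 W w s u Hlt (fun c _ => Hd c)) as [c [Hc _]].
      assert (w c * (u - s) <= 0).
      { generalize (Hw c); intro; nra. }
      lra.
    - subst; lra. }
  assert (He : 0 < - w t0 / 2) by lra.
  destruct (Hd t0 _ He) as [d Hdd].
  set (h := Rmin (d/2) (T/2)).
  assert (Hh : 0 < h).
  { unfold h; apply Rmin_glb_lt; [ generalize (cond_pos d) | ]; lra. }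
  assert (Hh1 : h <= T) by (unfold h; generalize (Rmin_r (d/2) (T/2)); lra).
  assert (Hh2 : Rabs h < d).
  { rewrite Rabs_right by lra. unfold h; generalize (Rmin_l (d/2) (T/2)) (cond_pos d); lra. }
  specialize (Hdd h (Rgt_not_eq _ _ Hh) Hh2).
  apply Rabs_def2 in Hdd. destruct Hdd as [Hd1 Hd2].
  assert (Hq : (W (t0 + h) - W t0) / h < 0) by lra.
  assert (Hq2 : W (t0 + h) - W t0 < 0).
  { replace (W (t0 + h) - W t0) with ((W (t0 + h) - W t0) / h * h) by (field; lra).
    apply Rmult_neg_pos; auto. }
  assert (W (t0 + T) <= W (t0 + h)) by (apply mono; lra).
  rewrite Hper in H. lra.
Qed.

Lemma const_of_d0 (f : R -> R) : (forall t, derivable_pt_lim f t 0) -> forall t1 t2, f t1 = f t2.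
Proof.
  intros Hd.
  assert (H : forall s u, s < u -> f s = f u).
  { intros s u Hsu. destruct (MVT_cor2 f (fun _ => 0) s u Hsu (fun c _ => Hd c)) as [c [Hc _]].
    lra. }
  intros t1 t2. destruct (Rtotal_order t1 t2) as [h|[h|h]]; [auto|subst; auto|].
  symmetry; auto.
Qed.

Lemma nonconst N p M x y : periodic_orbit N p M x y ->
  exists t0, fS1 p (x t0) (y t0) <> 0.
Proof.
  intros [Hs [_ [t1 [t2 Hne]]]].
  apply NNPP; intro Hn.
  assert (H0 : forall t, fS1 p (x t) (y t) = 0).
  { intro t. apply NNPP; intro h; apply Hn; eauto. }
  assert (Hx : forall t, derivable_pt_lim x t 0).
  { intro t. rewrite <- (H0 t). apply Hs. }
  pose proof (const_of_d0 x Hx) as Hc.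
  assert (Hy : forall t, y t = 2 / (p - 1) * x t).
  { intro t. specialize (H0 t). unfold fS1 in H0. lra. }
  destruct Hne as [h|h]; apply h; auto.
  rewrite !Hy, (Hc t1 t2); auto.
Qed.

Lemma powp_pos a e : 0 < a -> powp a e = Rpower a e.
Proof. intro h; unfold powp; destruct (Rlt_dec 0 a); [auto|lra]. Qed.
Lemma powp_0 e : powp 0 e = 0.
Proof. unfold powp; destruct (Rlt_dec 0 0); [lra|auto]. Qed.
Lemma powp_nonneg a e : 0 <= powp a e.
Proof. unfold powp; destruct (Rlt_dec 0 a); [unfold Rpower; left; apply exp_pos|lra]. Qed.

Lemma Rpower_lt1 u e : 0 < u < 1 -> 0 < e -> Rpower u e < 1.
Proof.
  intros [h1 h2] he. unfold Rpower. rewrite <- exp_0. apply exp_increasing.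
  assert (ln u < 0) by (rewrite <- ln_1; apply ln_increasing; lra). nra.
Qed.

Lemma dPP e u : 0 < e ->
  derivable_pt_lim (fun v => powp (Rabs v) (e+2)) u ((e+2) * (powp (Rabs u) e * u)).
Proof.
  intros he. destruct (Rtotal_order u 0) as [hu|[hu|hu]].
  -
    apply (dext _ (fun v => Rpower (- v) (e+2)) _ _ (-u)); [lra| |].
    + intros v hv. apply Rabs_def2 in hv. rewrite Rabs_left by lra. rewrite powp_pos by lra. auto.
    + rewrite Rabs_left by auto. rewrite powp_pos by lra.
      replace ((e + 2) * (Rpower (- u) e * u)) with ((e+2) * Rpower (-u) (e+2-1) * (-1)).
      * apply (dRp (fun v => - v)); [lra|]. 
        apply (derivable_pt_lim_opp (fun v => v)). apply derivable_pt_lim_id.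
      * replace (e+2-1) with (e+1) by ring. rewrite Rpower_plus, Rpower_1 by lra. ring.
  - subst u. rewrite Rabs_R0, powp_0, Rmult_0_r, Rmult_0_r.
    intros eps heps.
    assert (hm : 0 < Rmin eps 1) by (apply Rmin_glb_lt; lra).
    exists (mkposreal _ hm). intros h hh hlt. simpl in hlt.
    assert (h1 : Rabs h < eps) by (apply Rlt_le_trans with (1:=hlt); apply Rmin_l).
    assert (h2 : Rabs h < 1) by (apply Rlt_le_trans with (1:=hlt); apply Rmin_r).
    rewrite Rplus_0_l, Rabs_R0, powp_0, Rminus_0_r, Rminus_0_r.
    assert (ha : 0 < Rabs h) by (apply Rabs_pos_lt; auto).
    rewrite powp_pos by auto.
    rewrite Rpower_plus.
    replace 2 with (INR 2) by (simpl; ring). rewrite Rpower_pow by auto.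
    pose proof (Rpower_lt1 (Rabs h) e (conj ha h2) he) as hl.
    assert (hp : 0 < Rpower (Rabs h) e) by (unfold Rpower; apply exp_pos).
    unfold Rdiv. rewrite Rabs_mult, Rabs_inv.
    rewrite (Rabs_right (Rpower (Rabs h) e * Rabs h ^ 2)) by (apply Rle_ge; apply Rmult_le_pos; [lra| apply pow_le; lra]).
    replace (Rpower (Rabs h) e * Rabs h ^ 2 * / Rabs h) with (Rpower (Rabs h) e * Rabs h) by (field; lra).
    nra.
  - apply (dext _ (fun v => Rpower v (e+2)) _ _ u); [lra| |].
    + intros v hv. apply Rabs_def2 in hv. rewrite Rabs_right by lra. rewrite powp_pos by lra. auto.
    + rewrite Rabs_right by lra. rewrite powp_pos by lra.
      replace ((e + 2) * (Rpower u e * u)) with ((e+2) * Rpower u (e+2-1)).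
      * apply derivable_pt_lim_power; auto.
      * replace (e+2-1) with (e+1) by ring. rewrite Rpower_plus, Rpower_1 by lra. ring.
Qed.

Lemma dopp f t l : derivable_pt_lim f t l -> derivable_pt_lim (fun t => - f t) t (- l).
Proof. intros; apply (derivable_pt_lim_opp f); auto. Qed.
Lemma dPPc f t l e : 0 < e -> derivable_pt_lim f t l ->
  derivable_pt_lim (fun t => powp (Rabs (f t)) (e+2)) t ((e+2)*(powp (Rabs (f t)) e * f t) * l).
Proof. intros he hd. apply (dcomp f (fun v => powp (Rabs v) (e+2))); auto. apply dPP; auto. Qed.
Lemma deq f t l1 l2 : derivable_pt_lim f t l1 -> l1 = l2 -> derivable_pt_lim f t l2.
Proof. intros; subst; auto. Qed.

Lemma powp_mono_lt u v e : 0 < e -> 0 <= u < v -> powp u e < powp v e.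
Proof.
  intros he [h1 h2]. rewrite (powp_pos v) by lra.
  destruct (Rle_lt_or_eq_dec _ _ h1) as [h|h].
  - rewrite powp_pos by lra. apply Rlt_Rpower_l; lra.
  - subst. rewrite powp_0. unfold Rpower; apply exp_pos.
Qed.

Lemma part1 (N : nat) (HN : (3 <= N)%nat) p M : 0 < M -> 1 < p -> p <= (INR N + 2) / (INR N - 2) ->
  forall x y : R -> R, periodic_orbit (INR N) p M x y -> ~ (forall t, 0 <= x t /\ 0 <= y t).
Proof.
  intros HM Hp HpN x y Horb Hq.
  assert (HN3 : 3 <= INR N) by (replace 3 with (INR 3) by (simpl; ring); apply le_INR; auto).
  destruct (nonconst _ _ _ _ _ Horb) as [t0 Ht0].
  destruct Horb as [Hs [[T [HT Hper]] _]].
  set (a := 2 / (p - 1)).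
  set (K := Kc (INR N) p).
  set (q := 2 * p / (p + 1)).
  assert (Ha : 0 < a) by (unfold a; apply Rdiv_lt_0_compat; lra).
  assert (Hq1 : 0 < q - 1) by (unfold q; apply Rlt_Rminus; apply (Rmult_lt_reg_r (p+1)); [lra|]; field_simplify; lra).
  assert (Hd : 0 <= a - K).
  { assert (h : (INR N - 2) * p <= INR N + 2).
    { replace (INR N + 2) with ((INR N + 2) / (INR N - 2) * (INR N - 2)) by (field; lra).
      rewrite Rmult_comm. apply Rmult_le_compat_r; lra. }
    unfold a, K, Kc. replace (2 / (p - 1) - ((INR N - 2) * p - INR N) / (p - 1))
      with ((INR N + 2 - (INR N - 2) * p) / (p - 1)) by (field; lra).
    apply Rmult_le_pos; [lra|]. left; apply Rinv_0_lt_compat; lra. }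
  set (W := fun t => - (y t * y t / 2 - a * x t * y t + powp (Rabs (x t)) (p - 1 + 2) / (p + 1)
        + (a - K) * a * x t * x t / 2 + M * powp a q * powp (Rabs (x t)) (q - 1 + 2) / (q + 1))).
  set (w := fun t => - ((y t - a * x t) * ((a - K) * (y t - a * x t) +
        M * (powp (Rabs (y t)) q - powp a q * (powp (Rabs (x t)) (q - 1) * x t))))).
  assert (HW : forall t, derivable_pt_lim W t (w t)).
  { intro t. destruct (Hs t) as [dx dy]. unfold W.
    eapply deq.
    - unfold Rdiv.
      repeat (first [ apply dconst | apply dplus | apply dminus | apply dopp
               | apply dPPc; [lra| exact dx] | apply dmult | exact dx | exact dy ]).
    - unfold w, fS1, fS2. fold a. fold K. fold q. field. lra. }
  assert (Hxq : forall t, powp a q * (powp (Rabs (x t)) (q - 1) * x t) = powp (a * x t) q).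
  { intro t. destruct (Hq t) as [hx _]. destruct (Rle_lt_or_eq_dec _ _ hx) as [h|h].
    - rewrite Rabs_right by lra. rewrite !powp_pos by nra.
      rewrite <- Rpower_mult_distr by lra. 
      replace (Rpower (x t) q) with (Rpower (x t) ((q-1)+1)) by (f_equal; ring). rewrite Rpower_plus, Rpower_1 by lra. ring.
    - rewrite <- h. rewrite Rmult_0_r, Rmult_0_r. unfold powp. rewrite Rmult_0_r. destruct (Rlt_dec 0 0); [lra|ring]. }
  assert (Hw : forall t, w t <= 0 /\ (y t - a * x t <> 0 -> w t < 0)).
  { intro t. unfold w. rewrite Hxq. destruct (Hq t) as [hx hy].
    rewrite (Rabs_right (y t)) by lra.
    destruct (Rtotal_order (y t) (a * x t)) as [h|[h|h]].
    - assert (powp (y t) q < powp (a * x t) q) by (apply powp_mono_lt; lra).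
      assert (0 <= (y t - a * x t) * ((a - K) * (y t - a * x t))) by (replace ((y t - a * x t) * ((a - K) * (y t - a * x t))) with ((a - K) * ((y t - a * x t) * (y t - a * x t))) by ring; apply Rmult_le_pos; [lra|apply Rle_0_sqr]).
      assert (0 < (y t - a * x t) * (M * (powp (y t) q - powp (a * x t) q))).
      { assert (0 < M * (powp (a * x t) q - powp (y t) q)) by (apply Rmult_lt_0_compat; lra). nra. }
      split; [|intros _]; nra.
    - rewrite h. split; [|intro; lra]. lra.
    - assert (powp (a * x t) q < powp (y t) q) by (apply powp_mono_lt; nra).
      assert (0 <= (y t - a * x t) * ((a - K) * (y t - a * x t))) by (replace ((y t - a * x t) * ((a - K) * (y t - a * x t))) with ((a - K) * ((y t - a * x t) * (y t - a * x t))) by ring; apply Rmult_le_pos; [lra|apply Rle_0_sqr]).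
      assert (0 < (y t - a * x t) * (M * (powp (y t) q - powp (a * x t) q))).
      { assert (0 < M * (powp (y t) q - powp (a * x t) q)) by (apply Rmult_lt_0_compat; lra). nra. }
      split; [|intros _]; nra. }
  apply (lyap W w T HT HW (fun t => proj1 (Hw t))) with t0.
  - intro t. unfold W. destruct (Hper t) as [e1 e2]. rewrite e1, e2. auto.
  - apply (proj2 (Hw t0)). unfold fS1 in Ht0. fold a in Ht0. lra.
Qed.

Lemma amgm w U V : 0 < w < 1 -> 0 < U -> 0 < V ->
  exp (w * ln U + (1 - w) * ln V) <= w * U + (1 - w) * V /\
  (U <> V -> exp (w * ln U + (1 - w) * ln V) < w * U + (1 - w) * V).
Proof.
  intros hw hU hV. set (m := w * ln U + (1 - w) * ln V).
  assert (eU : U = exp m * exp (ln U - m)) by (rewrite <- exp_plus; replace (m + (ln U - m)) with (ln U) by ring; rewrite exp_ln; auto).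
  assert (eV : V = exp m * exp (ln V - m)) by (rewrite <- exp_plus; replace (m + (ln V - m)) with (ln V) by ring; rewrite exp_ln; auto).
  assert (hm : 0 < exp m) by apply exp_pos.
  pose proof (exp_ineq1_le (ln U - m)) as i1.
  pose proof (exp_ineq1_le (ln V - m)) as i2.
  assert (key : w * (ln U - m) + (1 - w) * (ln V - m) = 0) by (unfold m; ring).
  assert (S : w * U + (1 - w) * V = exp m * (w * exp (ln U - m) + (1 - w) * exp (ln V - m))).
  { rewrite eU at 1. rewrite eV at 1. ring. }
  rewrite S. clear S eU eV.
  split.
  - 
    assert (exp m * (w * (1 + (ln U - m)) + (1 - w) * (1 + (ln V - m))) = exp m) by (rewrite <- (Rmult_1_r (exp m)) at 2; f_equal; lra).
    assert (w * exp (ln U - m) + (1 - w) * exp (ln V - m) >= w * (1 + (ln U - m)) + (1 - w) * (1 + (ln V - m))) by nra.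
    nra.
  - intro hne.
    assert (hl : ln U <> ln V) by (intro h; apply hne; apply ln_inv; auto).
    assert (exp m * (w * (1 + (ln U - m)) + (1 - w) * (1 + (ln V - m))) = exp m) by (rewrite <- (Rmult_1_r (exp m)) at 2; f_equal; lra).
    assert (w * exp (ln U - m) + (1 - w) * exp (ln V - m) > w * (1 + (ln U - m)) + (1 - w) * (1 + (ln V - m))).
    { destruct (Req_dec (ln U - m) 0) as [h0|h0].
      - assert (h1 : ln V - m <> 0) by (intro; apply hl; lra).
        pose proof (exp_ineq1 _ h1). nra.
      - pose proof (exp_ineq1 _ h0). nra. }
    nra.
Qed.

Lemma strict_dec g g' lo hi : lo < hi ->
  (forall s, lo <= s <= hi -> derivable_pt_lim g s (g' s)) ->
  (forall s, lo <= s <= hi -> g' s <= 0) ->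
  (forall s1 s2, lo <= s1 -> s1 < s2 -> s2 <= hi -> g' s1 < 0 \/ g' s2 < 0) ->
  g hi < g lo.
Proof.
  intros hlh hd hle hst. set (m := (lo + hi) / 2).
  destruct (MVT_cor2 g g' lo m) as [c1 [e1 [c1a c1b]]]; [unfold m; lra| intros; apply hd; unfold m in *; lra |].
  destruct (MVT_cor2 g g' m hi) as [c2 [e2 [c2a c2b]]]; [unfold m; lra| intros; apply hd; unfold m in *; lra |].
  assert (h1 : g' c1 <= 0) by (apply hle; unfold m in *; lra).
  assert (h2 : g' c2 <= 0) by (apply hle; unfold m in *; lra).
  assert (hm1 : 0 < m - lo) by (unfold m; lra).
  assert (hm2 : 0 < hi - m) by (unfold m; lra).
  destruct (hst c1 c2) as [h|h]; unfold m in *; try lra; nra.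
Qed.

Lemma rpA u e e1 e2 : e = e1 + e2 -> Rpower u e = Rpower u e1 * Rpower u e2.
Proof. intros ->; apply Rpower_plus. Qed.
Lemma rp1 u e e1 : 0 < u -> e = e1 + 1 -> Rpower u e = Rpower u e1 * u.
Proof. intros h ->; rewrite Rpower_plus, Rpower_1; auto. Qed.
Lemma rpm1 u e e1 : 0 < u -> e = e1 - 1 -> Rpower u e = Rpower u e1 / u.
Proof. intros h ->. unfold Rminus. rewrite Rpower_plus, Rpower_Ropp, Rpower_1; auto. Qed.
Lemma rp_pos u e : 0 < Rpower u e.
Proof. unfold Rpower; apply exp_pos. Qed.

Definition Phi2 (a K M b al p q u v : R) : R :=
  - Rpower u al * ( a * u * (Rpower v (1-b) - Rpower a (1-b) * Rpower u (1-b)) / (1-b)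
                    - (Rpower v (2-b) - Rpower a (2-b) * Rpower u (2-b)) / (2-b) )
  + Rpower a (-b) * ( - K * a * Rpower u (al-b+2) / (al-b+2) + Rpower u (al-b+p+1) / (al-b+p+1)
                      + M * Rpower a q * Rpower u (al-b+q+1) / (al-b+q+1) ).

Definition Jf (a M b al p q u s : R) : R :=
  Rpower u al * ( - al * (Rpower s (2-b) - Rpower a (2-b) * Rpower u (2-b)) / ((2-b) * u)
                  + Rpower u p * (Rpower s (-b) - Rpower a (-b) * Rpower u (-b))
                  + M * (Rpower s (q-b) - Rpower a (q-b) * Rpower u (q-b)) ).

Lemma dW2 a K M b al p q x y t :
  0 < x t -> 0 < y t -> 0 < a -> b < 1 -> 0 < al -> 1 < p -> 1 < q ->
  al = (1 - b) * K / a - 1 ->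
  derivable_pt_lim x t (a * x t - y t) ->
  derivable_pt_lim y t (- K * y t + Rpower (x t) (p-1) * x t + M * Rpower (y t) q) ->
  derivable_pt_lim (fun t => Phi2 a K M b al p q (x t) (y t)) t
     ((y t - a * x t) * Jf a M b al p q (x t) (y t)).
Proof.
  intros hx hy ha hb hal hp hq Hal dx dy.
  unfold Phi2. eapply deq.
  - unfold Rdiv.
    repeat (first [ apply dconst | apply dplus | apply dminus | apply dopp
               | apply dRp; [assumption| first [exact dx | exact dy]] | apply dmult | exact dx | exact dy ]).
  - unfold Jf.
    set (u := x t) in *. set (v := y t) in *.
    rewrite (rpm1 u (al - 1) al) by (auto || ring).
    rewrite (rpm1 u (1 - b - 1) (1 - b)) by (auto || ring).
    rewrite (rp1 u (2 - b) (1 - b)) by (auto || ring).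
    rewrite (rpm1 u (2 - b - 1) (2 - b)) by (auto || ring).
    rewrite (rp1 u (2 - b) (1 - b)) by (auto || ring).
    rewrite (rpm1 u (al - b + 2 - 1) (al - b + 2)) by (auto || ring).
    rewrite (rp1 u (al - b + 2) (al + (1 - b))) by (auto || ring).
    rewrite (rpm1 u (al - b + p + 1 - 1) (al - b + p + 1)) by (auto || ring).
    rewrite (rp1 u (al - b + p + 1) (al + (1 - b) + (p - 1))) by (auto || ring).
    rewrite (rpm1 u (al - b + q + 1 - 1) (al - b + q + 1)) by (auto || ring).
    rewrite (rp1 u (al - b + q + 1) (al + (1 - b) + (q - 1))) by (auto || ring).
    rewrite (rpA u (al + (1 - b) + (p - 1)) (al + (1 - b)) (p - 1)) by ring.
    rewrite (rpA u (al + (1 - b) + (q - 1)) (al + (1 - b)) (q - 1)) by ring.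
    rewrite (rpA u (al + (1 - b)) al (1 - b)) by ring.
    rewrite (rp1 u p (p - 1)) by (auto || ring).
    rewrite (rpm1 u (-b) (1 - b)) by (auto || ring).
    rewrite (rpA u (q - b) (q - 1) (1 - b)) by ring.
    rewrite (rpm1 v (1 - b - 1) (1 - b)) by (auto || ring).
    rewrite (rpm1 v (2 - b - 1) (2 - b)) by (auto || ring).
    rewrite (rp1 v (2 - b) (1 - b)) by (auto || ring).
    rewrite (rpm1 v (-b) (1 - b)) by (auto || ring).
    rewrite (rpA v (q - b) (q - 1) (1 - b)) by ring.
    rewrite (rp1 v q (q - 1)) by (auto || ring).
    rewrite (rp1 a (2 - b) (1 - b)) by (auto || ring).
    rewrite (rpm1 a (-b) (1 - b)) by (auto || ring).
    rewrite (rpA a (q - b) (q - 1) (1 - b)) by ring.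
    rewrite (rp1 a q (q - 1)) by (auto || ring).
    set (A := Rpower u al). set (X1 := Rpower u (1 - b)). set (P := Rpower u (p - 1)).
    set (Q := Rpower u (q - 1)). set (Y1 := Rpower v (1 - b)). set (Qy := Rpower v (q - 1)).
    set (Ca := Rpower a (1 - b)). set (Cq := Rpower a (q - 1)).
    clearbody A X1 P Q Y1 Qy Ca Cq u v.
    assert (hK : 0 < (1 - b) * K - a).
    { replace ((1 - b) * K - a) with (al * a) by (subst al; field; lra). nra. }
    subst al.
    field.
    repeat split; nra.
Qed.

Definition Dd (M b al p q u s : R) : R :=
  - al * s / u - b * Rpower u p / s + M * (q - b) * Rpower s (q - 1).

Lemma Jf_zero a M b al p q u : 0 < a -> 0 < u -> Jf a M b al p q u (a * u) = 0.
Proof.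
  intros ha hu. unfold Jf. rewrite <- !Rpower_mult_distr by auto.
  rewrite !Rminus_diag. unfold Rdiv. ring.
Qed.

Lemma dJf a M b al p q u s : 0 < u -> 0 < s -> 0 < 2 - b ->
  derivable_pt_lim (fun s => Jf a M b al p q u s) s (Rpower u al * Rpower s (-b) * Dd M b al p q u s).
Proof.
  intros hu hs hb. unfold Jf. eapply deq.
  - unfold Rdiv.
    repeat (first [ apply dconst | apply dplus | apply dminus | apply dopp
               | apply derivable_pt_lim_power; assumption | apply dmult ]).
  - unfold Dd.
    rewrite (rpm1 s (2 - b - 1) (2 - b)) by (auto || ring).
    rewrite (rp1 s (2 - b) (-b + 2 - 1)) by (auto || ring).
    rewrite (rpm1 s (-b - 1) (-b)) by (auto || ring).
    rewrite (rpm1 s (q - b - 1) (q - b)) by (auto || ring).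
    rewrite (rpA s (q - b) (-b) q) by ring.
    rewrite (rp1 s q (q - 1)) by (auto || ring).
    replace (-b + 2 - 1) with (-b + 1) by ring.
    rewrite (rp1 s (-b + 1) (-b)) by (auto || ring).
    field. lra.
Qed.

Lemma wid p La Lb s u : 1 < p -> p / (p + 1) * (La + s - u) +
  (1 - p / (p + 1)) * (Lb + p * u - s) =
  p / (p + 1) * La + (1 - p / (p + 1)) * Lb + (2 * p / (p + 1) - 1) * s.
Proof. intros. field. lra. Qed.

Lemma uvid w al b s u P : 0 < w < 1 -> 0 < s -> 0 < u ->
  w * (al / w * s * / u) + (1 - w) * (b / (1 - w) * P * / s) = al * s / u + b * P / s.
Proof. intros. field. repeat split; lra. Qed.

Lemma uveq w al b s u P : 0 < w < 1 -> 0 < s -> 0 < u -> 0 < al ->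
  al / w * s * / u = b / (1 - w) * P * / s -> s * s = b * P * u * w / (al * (1 - w)).
Proof.
  intros hw hs hu hal e.
  apply (Rmult_eq_compat_r (s * u)) in e.
  replace (al / w * s * / u * (s * u)) with (al / w * (s * s)) in e by (field; lra).
  replace (b / (1 - w) * P * / s * (s * u)) with (b / (1 - w) * P * u) in e by (field; lra).
  apply (Rmult_eq_compat_l (w / al)) in e.
  replace (w / al * (al / w * (s * s))) with (s * s) in e by (field; lra).
  rewrite e. field. lra.
Qed.

Lemma Dd_le M b al p q u s kap : 0 < u -> 0 < s -> 0 < b -> 0 < al -> 1 < p -> q = 2 * p / (p + 1) ->
  kap = exp (p / (p + 1) * ln (al / (p / (p + 1))) + (1 - p / (p + 1)) * ln (b / (1 - p / (p + 1)))) ->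
  M * (q - b) <= kap ->
  Dd M b al p q u s <= 0 /\
  (Dd M b al p q u s = 0 -> s * s = b * Rpower u p * u * (p / (p + 1)) / (al * (1 - p / (p + 1)))).
Proof.
  intros hu hs hb hal hp hq hk hMk.
  set (w := p / (p + 1)) in *.
  assert (hw : 0 < w < 1).
  { unfold w; split; [apply Rdiv_lt_0_compat; lra|].
    apply (Rmult_lt_reg_r (p + 1)); [lra|]. field_simplify; lra. }
  set (U := al / w * s * / u). set (V := b / (1 - w) * Rpower u p * / s).
  assert (hU : 0 < U).
  { unfold U. apply Rmult_lt_0_compat; [apply Rmult_lt_0_compat; [apply Rdiv_lt_0_compat; lra| lra] | apply Rinv_0_lt_compat; lra]. }
  assert (hP : 0 < Rpower u p) by apply rp_pos.
  assert (hV : 0 < V).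
  { unfold V. apply Rmult_lt_0_compat; [apply Rmult_lt_0_compat; [apply Rdiv_lt_0_compat; lra| lra] | apply Rinv_0_lt_compat; lra]. }
  destruct (amgm w U V hw hU hV) as [i1 i2].
  assert (key : exp (w * ln U + (1 - w) * ln V) = kap * Rpower s (q - 1)).
  { assert (lU : ln U = ln (al / w) + ln s - ln u).
    { unfold U. rewrite ln_mult, ln_mult, ln_Rinv; try lra; try (apply Rdiv_lt_0_compat; lra).
      - apply Rmult_lt_0_compat; [apply Rdiv_lt_0_compat; lra| lra].
      - apply Rinv_0_lt_compat; lra. }
    assert (lV : ln V = ln (b / (1 - w)) + p * ln u - ln s).
    { unfold V. rewrite ln_mult, ln_mult, ln_Rinv, ln_Rpower; try lra; try (apply Rdiv_lt_0_compat; lra).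
      - apply Rmult_lt_0_compat; [apply Rdiv_lt_0_compat; lra| lra].
      - apply Rinv_0_lt_compat; lra. }
    rewrite lU, lV, hk. unfold Rpower. rewrite <- exp_plus. f_equal.
    set (La := ln (al / w)). set (Lb := ln (b / (1 - w))). clearbody La Lb. rewrite hq. unfold w. apply wid; lra. }
  assert (sumUV : w * U + (1 - w) * V = al * s / u + b * Rpower u p / s).
  { unfold U, V. apply uvid; lra. }
  assert (eUV : U = V -> s * s = b * Rpower u p * u * w / (al * (1 - w))).
  { intro e. unfold U, V in e. apply uveq; auto. }
  clearbody U V w.
  assert (hD : Dd M b al p q u s = - (w * U + (1 - w) * V) + M * (q - b) * Rpower s (q - 1)).
  { rewrite sumUV. unfold Dd, Rdiv. ring. }
  assert (hS : 0 < Rpower s (q - 1)) by apply rp_pos.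
  assert (h1 : M * (q - b) * Rpower s (q - 1) <= kap * Rpower s (q - 1)) by (apply Rmult_le_compat_r; lra).
  split.
  - rewrite hD. lra.
  - intro h0. destruct (Req_dec U V) as [e|e].
    + auto.
    + specialize (i2 e). rewrite hD in h0. lra.
Qed.

Lemma J_dec a M b al p q u kap lo hi : 0 < u -> 0 < lo -> lo < hi -> 0 < b < 1 -> 0 < al -> 1 < p ->
  q = 2 * p / (p + 1) ->
  kap = exp (p / (p + 1) * ln (al / (p / (p + 1))) + (1 - p / (p + 1)) * ln (b / (1 - p / (p + 1)))) ->
  M * (q - b) <= kap ->
  Jf a M b al p q u hi < Jf a M b al p q u lo.
Proof.
  intros hu hlo hlh hb hal hp hq hk hMk.
  apply (strict_dec (fun s => Jf a M b al p q u s)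
           (fun s => Rpower u al * Rpower s (-b) * Dd M b al p q u s)); auto.
  - intros s hs. apply dJf; lra.
  - intros s hs. destruct (Dd_le M b al p q u s kap) as [h _]; try lra.
    assert (0 < Rpower u al * Rpower s (-b)) by (apply Rmult_lt_0_compat; apply rp_pos).
    nra.
  - intros s1 s2 h1 h12 h2.
    destruct (Dd_le M b al p q u s1 kap) as [d1 e1]; try lra.
    destruct (Dd_le M b al p q u s2 kap) as [d2 e2]; try lra.
    assert (p1 : 0 < Rpower u al * Rpower s1 (-b)) by (apply Rmult_lt_0_compat; apply rp_pos).
    assert (p2 : 0 < Rpower u al * Rpower s2 (-b)) by (apply Rmult_lt_0_compat; apply rp_pos).
    destruct (Req_dec (Dd M b al p q u s1) 0) as [z1|z1].
    + destruct (Req_dec (Dd M b al p q u s2) 0) as [z2|z2].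
      * specialize (e1 z1). specialize (e2 z2). rewrite <- e2 in e1. nra.
      * right. assert (Dd M b al p q u s2 < 0) by lra. nra.
    + left. assert (Dd M b al p q u s1 < 0) by lra. nra.
Qed.

Lemma J_sign a M b al p q u v kap : 0 < u -> 0 < v -> 0 < a -> 0 < b < 1 -> 0 < al -> 1 < p ->
  q = 2 * p / (p + 1) ->
  kap = exp (p / (p + 1) * ln (al / (p / (p + 1))) + (1 - p / (p + 1)) * ln (b / (1 - p / (p + 1)))) ->
  M * (q - b) <= kap ->
  (v - a * u) * Jf a M b al p q u v <= 0 /\ (v <> a * u -> (v - a * u) * Jf a M b al p q u v < 0).
Proof.
  intros hu hv ha hb hal hp hq hk hMk.
  assert (strict : v <> a * u -> (v - a * u) * Jf a M b al p q u v < 0).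
  { intro hne. pose proof (Jf_zero a M b al p q u ha hu) as z.
    destruct (Rtotal_order v (a * u)) as [h|[h|h]].
    - pose proof (J_dec a M b al p q u kap v (a * u)) as j.
      rewrite z in j. assert (0 < Jf a M b al p q u v) by (apply j; auto; nra). nra.
    - contradiction.
    - pose proof (J_dec a M b al p q u kap (a * u) v) as j.
      rewrite z in j. assert (Jf a M b al p q u v < 0) by (apply j; auto; nra). nra. }
  split; auto.
  destruct (Req_dec v (a * u)) as [e|e].
  - rewrite e. lra.
  - left; auto.
Qed.

Ltac pos := repeat (apply Rmult_lt_0_compat || apply Rinv_0_lt_compat); lra.

Lemma consts n p M : 3 <= n -> (n + 2) / (n - 2) < p -> 0 < M -> M <= Mbar n p ->
  let a := 2 / (p - 1) in let K := Kc n p in let q := 2 * p / (p + 1) in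
  let b := 2 * ((n - 2) * p - n - 2) / ((n - 2) * (p - 1) * (p + 1)) in
  let al := (1 - b) * K / a - 1 in
  1 < p /\ 0 < b < 1 /\ 0 < al /\
  M * (q - b) <= exp (p / (p + 1) * ln (al / (p / (p + 1))) + (1 - p / (p + 1)) * ln (b / (1 - p / (p + 1)))).
Proof.
  intros hn hp hM hMb a K q b al.
  assert (hn2 : 0 < n - 2) by lra.
  assert (hE0 : n + 2 < (n - 2) * p).
  { replace (n + 2) with ((n + 2) / (n - 2) * (n - 2)) by (field; lra).
    rewrite (Rmult_comm (n - 2)). apply Rmult_lt_compat_r; lra. }
  assert (hp1 : 1 < p).
  { destruct (Rle_lt_dec p 1) as [h|h]; auto. nra. }
  set (E := (n - 2) * p - n - 2) in *.
  assert (hE : 0 < E) by (unfold E; lra).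
  set (F := (n - 2) * (p - 1) ^ 2 + 4).
  assert (hF : 0 < F) by (unfold F; nra).
  assert (eb : b = 2 * E / ((n - 2) * (p - 1) * (p + 1))) by reflexivity.
  assert (hb0 : 0 < b) by (rewrite eb; unfold Rdiv; pos).
  assert (e1b : 1 - b = ((n - 2) * (p - 1) ^ 2 + 8) / ((n - 2) * (p - 1) * (p + 1))).
  { rewrite eb. unfold E. field. repeat split; lra. }
  assert (hb1 : b < 1).
  { assert (0 < 1 - b) by (rewrite e1b; unfold Rdiv; apply Rmult_lt_0_compat; [nra| pos]). lra. }
  assert (eal : al = F * E / (2 * (p - 1) * (p + 1) * (n - 2))).
  { unfold al, K, Kc, a. rewrite eb. unfold F, E. field. repeat split; lra. }
  assert (hal : 0 < al) by (rewrite eal; unfold Rdiv; pos).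
  assert (eqb : q - b = 2 * F / ((n - 2) * (p - 1) * (p + 1))).
  { unfold q. rewrite eb. unfold F, E. field. repeat split; lra. }
  assert (hqb : 0 < q - b) by (rewrite eqb; unfold Rdiv; pos).
  split; auto. split; auto. split; auto.
  set (w := p / (p + 1)).
  assert (e1w : 1 - w = / (p + 1)) by (unfold w; field; lra).
  set (kap := exp (w * ln (al / w) + (1 - w) * ln (b / (1 - w)))).
  assert (key : Mbar n p * (q - b) = kap).
  { assert (hpos : 0 < Mbar n p * (q - b)).
    { unfold Mbar. rewrite !powp_pos by nra. fold E. unfold Rdiv. apply Rmult_lt_0_compat; [|auto].
      apply Rmult_lt_0_compat; [nra|]. apply Rinv_0_lt_compat. apply Rmult_lt_0_compat; apply rp_pos. }
    apply ln_inv; auto. { unfold kap; apply exp_pos. }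
    unfold kap. rewrite ln_exp.
    unfold Mbar. rewrite !powp_pos by nra. fold E. fold F. fold w.
    rewrite eqb, eal, eb, e1w.
    replace ((p + 1) * E / (Rpower (4 * p) w * Rpower F (1 / (p + 1))) * (2 * F / ((n - 2) * (p - 1) * (p + 1))))
      with (E * 2 * F * / (n - 2) * / (p - 1) * / Rpower (4 * p) w * / Rpower F (1 / (p + 1))) by (field; repeat split; try lra; apply Rgt_not_eq, rp_pos).
    replace (F * E / (2 * (p - 1) * (p + 1) * (n - 2)) / w) with (F * E * / 2 * / (p - 1) * / (n - 2) * / p)
      by (unfold w; field; repeat split; lra).
    replace (2 * E / ((n - 2) * (p - 1) * (p + 1)) / / (p + 1)) with (2 * E * / (n - 2) * / (p - 1))
      by (field; repeat split; lra).
    assert (h4 : 0 < 4 * p) by lra.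
    assert (r1 : 0 < Rpower (4 * p) w) by apply rp_pos.
    assert (r2 : 0 < Rpower F (1 / (p + 1))) by apply rp_pos.
    repeat rewrite ln_mult by pos.
    repeat rewrite ln_Rinv by pos.
    rewrite !ln_Rpower.
    replace (4 * p) with (2 * 2 * p) by ring.
    repeat rewrite ln_mult by pos.
    unfold w. field. lra. }
  fold w. fold kap. rewrite <- key. apply Rmult_le_compat_r; lra.
Qed.

Lemma part2 (N : nat) (HN : (3 <= N)%nat) : forall p M : R, (INR N + 2) / (INR N - 2) < p ->
     0 < M -> M <= Mbar (INR N) p ->
     forall X : R, is_XM (INR N) p M X ->
     forall x y : R -> R, periodic_orbit (INR N) p M x y ->
     (forall t, 0 < x t /\ 0 < y t) ->
     ~ surrounds x y X (2 / (p - 1) * X).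
Proof.
  intros p M hp hM hMb X _ x y Horb Hpos _.
  assert (hn3 : 3 <= INR N) by (replace 3 with (INR 3) by (simpl; ring); apply le_INR; auto).
  pose proof (consts (INR N) p M hn3 hp hM hMb) as HC. cbv zeta in HC.
  destruct HC as [hp1 [hb [hal hk]]].
  set (a := 2 / (p - 1)) in *.
  set (K := Kc (INR N) p) in *.
  set (q := 2 * p / (p + 1)) in *.
  set (b := 2 * ((INR N - 2) * p - INR N - 2) / ((INR N - 2) * (p - 1) * (p + 1))) in *.
  set (al := (1 - b) * K / a - 1) in *.
  assert (ha : 0 < a) by (unfold a; apply Rdiv_lt_0_compat; lra).
  assert (hq : 1 < q) by (unfold q; apply (Rmult_lt_reg_r (p + 1)); [lra|]; field_simplify; lra).
  destruct (nonconst _ _ _ _ _ Horb) as [t0 Ht0].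
  destruct Horb as [Hs [[T [HT Hper]] _]].
  set (W := fun t => Phi2 a K M b al p q (x t) (y t)).
  set (w := fun t => (y t - a * x t) * Jf a M b al p q (x t) (y t)).
  assert (HW : forall t, derivable_pt_lim W t (w t)).
  { intro t. destruct (Hs t) as [dx dy]. destruct (Hpos t) as [hx hy].
    apply dW2; auto; try lra.
    - eapply deq; [exact dy|]. unfold fS2. rewrite !Rabs_right by lra. rewrite !powp_pos by lra.
      fold K. fold q. ring. }
  assert (Hw : forall t, w t <= 0 /\ (y t <> a * x t -> w t < 0)).
  { intro t. destruct (Hpos t) as [hx hy]. unfold w.
    apply (J_sign a M b al p q (x t) (y t)
      (exp (p / (p + 1) * ln (al / (p / (p + 1))) + (1 - p / (p + 1)) * ln (b / (1 - p / (p + 1)))))); auto; lra. }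
  apply (lyap W w T HT HW (fun t => proj1 (Hw t))) with t0.
  - intro t. unfold W. destruct (Hper t) as [e1 e2]. rewrite e1, e2. auto.
  - apply (proj2 (Hw t0)). unfold fS1 in Ht0. fold a in Ht0. lra.
Qed.

Theorem lemma3p2 (N : nat) (HN : (3 <= N)%nat) :
  (forall p M : R, 0 < M -> 1 < p -> p <= (INR N + 2) / (INR N - 2) ->
     forall x y : R -> R, periodic_orbit (INR N) p M x y ->
     ~ (forall t, 0 <= x t /\ 0 <= y t)) /\
  (forall p M : R, (INR N + 2) / (INR N - 2) < p ->
     0 < M -> M <= Mbar (INR N) p ->
     forall X : R, is_XM (INR N) p M X ->
     forall x y : R -> R, periodic_orbit (INR N) p M x y ->
     (forall t, 0 < x t /\ 0 < y t) ->
     ~ surrounds x y X (2 / (p - 1) * X)).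
Proof.
  split.
  - intros p M hM hp hpN x y Horb. exact (part1 N HN p M hM hp hpN x y Horb).
  - exact (part2 N HN).
Qed.
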